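(* Let $A=(a_{kl})$ be an $n\times n$ matrix with entries in $\{0,1,2,\dots\}\cup\{\infty\}$ and no zeros on the diagonal. Let $i\neq j$ be indices such that $a_{ij}\neq0$ and row $j$ of $A$ contains no $\infty$. Let $A'$ be obtained from $A$ by replacing row $i$ with $(a_{i1}+a_{j1},\dots,a_{in}+a_{jn})$ and then subtracting $1$ from the $(i,j)$ entry, so that the new $(i,j)$ entry is $a_{ij}+a_{jj}-1$. All other rows are unchanged. Then $A\sim_M A'$. Moreover: - $A'$ has no zeros on the diagonal; - if $A$ is irreducible, so is $A'$; - if the top-left $m\times m$ corner of $A$ is irreducible, so is the top-left $m\times m$ corner of $A'$.
   Context: Arithmetic conventions: $\infty+a=\infty$ and $\infty-1=\infty$. For a finite index set $X$ and an $X\times X$ matrix $A$ with entries in $\{0,1,2,\dots\}\cup\{\infty\}$, $G_A$ is the graph with vertex set $X$ and exactly $A(x,y)$ edges from $x$ to $y$. A matrix $A$ is irreducible if $G_A$ is strongly connected. For matrices, $A\sim_M B$ means $G_A\sim_M G_B$. A graph $G=(G^0,G^1,r,s)$ may have multiple edges and loops. A source receives no edges, a sink emits no edges, and an infinite emitter emits infinitely many edges. A vertex is singular if it is a sink or infinite emitter, and regular otherwise. Move-equivalence $\sim_M$ is the smallest equivalence relation on graphs with finitely many vertices such that $G\sim_M E$ whenever $E$ is isomorphic to a graph obtained from $G$ by one of the following moves. (S) Delete a regular source together with the edges it emits. (R) For a regular vertex $u$ emitting exactly one edge $f$, with $r(f)\neq u$, and all of whose incoming edges have the same source $v$: delete $u$,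 $f$ and the edges into $u$, and add for each $e\in r^{-1}(u)$ an edge $[ef]$ from $v$ to $r(f)$. (O) Out-splitting at a non-sink $v$ along a partition $\mathcal E_1,\dots,\mathcal E_n$ of $s^{-1}(v)$ with at most one infinite part. Replace $v$ by $v^1,\dots,v^n$. Each edge $e$ into $v$ becomes copies $e^1,\dots,e^n$ with $r(e^i)=v^i$ and source $s(e)$, or source $v^j$ if $s(e)=v$ and $e\in\mathcal E_j$. An edge from $v$ to $w\neq v$ lying in $\mathcal E_i$ gets source $v^i$. (I) In-splitting at a regular non-source $v$ along a partition $\mathcal E_1,\dots,\mathcal E_n$ of $r^{-1}(v)$. Replace $v$ by $v^1,\dots,v^n$. Each edge $e$ out of $v$ becomes copies $e^1,\dots,e^n$ with $s(e^i)=v^i$ and range $r(e)$, or range $v^j$ if $r(e)=v$ and $e\in\mathcal E_j$. An edge into $v$ from $w\neq v$ lying in $\mathcal E_i$ gets range $v^i$. *)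

(* Defs.v *)
From Stdlib Require Import Relations List.
From mathcomp Require Import all_boot matrix.

Set Implicit Arguments.
Unset Strict Implicit.
Unset Printing Implicit Defensive.

Inductive xnat : Type := xfin of nat | xinf.

Definition xadd (a b : xnat) : xnat :=
  match a, b with xfin m, xfin k => xfin (m + k) | _, _ => xinf end.

Definition xpred (a : xnat) : xnat :=
  match a with xfin m => xfin m.-1 | xinf => xinf end.

Definition xlt (k : nat) (a : xnat) : Prop :=
  match a with xfin m => k < m | xinf => True end.

Record graph : Type := Graph {
  gV : finType;
  gE : Type;
  gs : gE -> gV;
  gr : gE -> gV }.

Section GraphNotions.
Variable G : graph.

Definition fin_pred (P : gE G -> Prop) : Prop :=
  exists l : list (gE G), forall e, P e -> List.In e l.

Definition is_source (v : gV G) : Prop := forall e, gr e <> v.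
Definition is_sink (v : gV G) : Prop := forall e, gs e <> v.
Definition regular (v : gV G) : Prop :=
  (exists e, gs e = v) /\ fin_pred (fun e => gs e = v).

Definition edge_rel : relation (gV G) :=
  fun x y => exists e, gs e = x /\ gr e = y.
Definition strongly_connected : Prop :=
  forall x y : gV G, clos_refl_trans _ edge_rel x y.
End GraphNotions.

(* H is isomorphic to the graph with vertex set {x : VT | inV x},
   edge set {t : ET | inE t}, source src and range rng. *)
Definition iso_desc (H : graph) (VT ET : Type) (inV : VT -> Prop)
    (inE : ET -> Prop) (src rng : ET -> VT) : Prop :=
  exists (bv : gV H -> VT) (be : gE H -> ET),
    [/\ injective bv, (forall x, inV (bv x)) & (forall y, inV y -> exists x, bv x = y)] /\
    [/\ injective be, (forall e, inE (be e)) & (forall t, inE t -> exists e, be e = t)] /\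
    (forall e, bv (gs e) = src (be e)) /\
    (forall e, bv (gr e) = rng (be e)).

Definition moveS (G H : graph) : Prop :=
  exists v : gV G, regular v /\ is_source v /\
    iso_desc H (fun x : gV G => x <> v) (fun e : gE G => gs e <> v)
      (@gs G) (@gr G).

Definition moveR (G H : graph) : Prop :=
  exists (u v : gV G) (f : gE G),
    [/\ regular u, gs f = u, (forall e, gs e = u -> e = f), gr f <> u &
        (forall e, gr e = u -> gs e = v)] /\
    iso_desc H (fun x : gV G => x <> u) (fun e : gE G => gs e <> u)
      (fun e => if gr e == u then v else gs e)
      (fun e => if gr e == u then gr f else gr e).

(* partition of {e | P e} into k nonempty blocks, block of e is p e *)
Definition partition_of (G : graph) (P : gE G -> Prop) (k : nat)
    (p : gE G -> 'I_k) : Prop :=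
  forall i : 'I_k, exists e, P e /\ p e = i.

Definition moveO (G H : graph) : Prop :=
  exists (v : gV G) (k : nat) (p : gE G -> 'I_k),
    [/\ ~ is_sink v, partition_of (fun e => gs e = v) p,
        (forall i j : 'I_k,
            ~ fin_pred (fun e => gs e = v /\ p e = i) ->
            ~ fin_pred (fun e => gs e = v /\ p e = j) -> i = j) &
    iso_desc H
      (fun z : (gV G + 'I_k)%type =>
         match z with inl x => x <> v | inr _ => True end)
      (fun t : (gE G * option 'I_k)%type =>
         match t with (e, None) => gr e <> v | (e, Some _) => gr e = v end)
      (fun t => if gs t.1 == v then inr (p t.1) else inl (gs t.1))
      (fun t => match t.2 with None => inl (gr t.1) | Some i => inr i end)].

Definition moveI (G H : graph) : Prop :=
  exists (v : gV G) (k : nat) (p : gE G -> 'I_k),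
    [/\ regular v, ~ is_source v, partition_of (fun e => gr e = v) p &
    iso_desc H
      (fun z : (gV G + 'I_k)%type =>
         match z with inl x => x <> v | inr _ => True end)
      (fun t : (gE G * option 'I_k)%type =>
         match t with (e, None) => gs e <> v | (e, Some _) => gs e = v end)
      (fun t => match t.2 with None => inl (gs t.1) | Some i => inr i end)
      (fun t => if gr t.1 == v then inr (p t.1) else inl (gr t.1))].

Definition move (G H : graph) : Prop :=
  moveS G H \/ moveR G H \/ moveO G H \/ moveI G H.

Definition move_eq : relation graph := clos_refl_sym_trans graph move.

(* G_A: exactly A(x,y) edges from x to y; edge (x,y,k) with k < A(x,y) *)
Definition GA (n : nat) (A : 'M[xnat]_n) : graph :=
  @Graph 'I_n {t : 'I_n * 'I_n * nat | xlt t.2 (A t.1.1 t.1.2)}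
    (fun t => (sval t).1.1) (fun t => (sval t).1.2).

Definition irreducible (n : nat) (A : 'M[xnat]_n) : Prop :=
  strongly_connected (GA A).

Definition mx_move_eq (n m : nat) (A : 'M[xnat]_n) (B : 'M[xnat]_m) : Prop :=
  move_eq (GA A) (GA B).

Definition corner (n m : nat) (h : m <= n) (A : 'M[xnat]_n) : 'M[xnat]_m :=
  \matrix_(k < m, l < m) A (widen_ord h k) (widen_ord h l).

Definition row_add_move (n : nat) (A : 'M[xnat]_n) (i j : 'I_n) : 'M[xnat]_n :=
  \matrix_(k, l)
    if k == i then
      (if l == j then xpred (xadd (A i l) (A j l)) else xadd (A i l) (A j l))
    else A k l.

(* Main.v *)
Require Import Defs.
From Stdlib Require Import Relations List.
From mathcomp Require Import all_boot matrix.
From mathcomp Require Import zify.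
From Stdlib Require Import Classical ClassicalEpsilon ProofIrrelevance.

Set Implicit Arguments.
Unset Strict Implicit.
Unset Printing Implicit Defensive.


Definition emi := excluded_middle_informative.

Lemma sigP_eq (T : Type) (P : T -> Prop) (a b : {t | P t}) :
  proj1_sig a = proj1_sig b -> a = b.
Proof. case: a b => [x hx] [y hy] /= exy; subst y; f_equal; apply: proof_irrelevance. Qed.

Lemma iso_desc_ext H VT ET (inV inV' : VT -> Prop) (inE inE' : ET -> Prop) src rng src' rng' :
  iso_desc H inV inE src rng ->
  (forall x, inV x <-> inV' x) -> (forall t, inE t <-> inE' t) ->
  (forall t, inE t -> src t = src' t) -> (forall t, inE t -> rng t = rng' t) ->
  iso_desc H inV' inE' src' rng'.
Proof.
move=> [bv [be [[bvi bvin bvs] [[bei bein bes] [hs hr]]]]] hV hE hS hR.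
exists bv, be; split; [split|split; [split|split]] => //.
- by move=> x; apply/hV.
- by move=> y /hV; apply: bvs.
- by move=> e; apply/hE.
- by move=> t /hE; apply: bes.
- by move=> e; rewrite hs hS.
- by move=> e; rewrite hr hR.
Qed.

Section Realize.
Variables (VT : finType) (inV : pred VT) (ET : Type) (inE : ET -> Prop)
  (src rng : ET -> VT) (v0 : {x : VT | inV x}).

Definition realize : graph :=
  @Graph {x : VT | inV x} {t : ET | inE t}
    (fun t => insubd v0 (src (proj1_sig t))) (fun t => insubd v0 (rng (proj1_sig t))).

Lemma realize_desc :
  (forall t, inE t -> inV (src t)) -> (forall t, inE t -> inV (rng t)) ->
  iso_desc realize (fun x => inV x) inE src rng.
Proof.
move=> hs hr; exists val, (fun t => proj1_sig t); split; [split|split; [split|split]].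
- exact: val_inj.
- by move=> x; apply: valP.
- by move=> y hy; exists (exist _ y hy).
- by move=> a b; apply: sigP_eq.
- by move=> e; apply: proj2_sig.
- by move=> t ht; exists (exist _ t ht).
- by case=> t ht /=; rewrite insubdK //; apply: hs.
- by case=> t ht /=; rewrite insubdK //; apply: hr.
Qed.
End Realize.

Lemma list_cover (T T' : Type) (phi : T' -> T) (l : list T) : forall (P' : T' -> Prop),
  (forall g g', P' g -> P' g' -> phi g = phi g' -> g = g') ->
  (forall g, P' g -> In (phi g) l) -> exists l', forall g, P' g -> In g l'.
Proof.
elim: l => [|a l IH] P' hinj hc.
  by exists nil => g /hc.
case: (classic (exists g0, P' g0 /\ phi g0 = a)) => [[g0 [h0 e0]]|hn].
- have [l' hl'] := IH (fun g => P' g /\ g <> g0) ltac:(by move=> g g' [hg _] [hg' _]; apply: hinj)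
    ltac:(move=> g [hg hne]; case: (hc g hg) => // ea; case: hne; apply: hinj => //; congruence).
  exists (g0 :: l') => g hg; case: (classic (g = g0)) => [->|hne]; first by left.
  by right; apply: hl'.
- apply: (IH P' hinj) => g hg; case: (hc g hg) => // ea; case: hn; by exists g.
Qed.

Lemma fin_pred_inj (K K' : graph) (P : gE K -> Prop) (P' : gE K' -> Prop) (phi : gE K' -> gE K) :
  (forall g, P' g -> P (phi g)) -> (forall g g', P' g -> P' g' -> phi g = phi g' -> g = g') ->
  fin_pred P -> fin_pred P'.
Proof.
move=> hp hinj [l hl]; have [l' hl'] := list_cover hinj (fun g hg => hl _ (hp g hg)).
by exists l'.
Qed.

Lemma fin_pred_sub (K : graph) (P Q : gE K -> Prop) :
  (forall g, Q g -> P g) -> fin_pred P -> fin_pred Q.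
Proof. by move=> h [l hl]; exists l => g /h /hl. Qed.


Definition redirect (K : graph) (e : gE K) (v : gV K) : graph :=
  @Graph (gV K) (gE K) (fun g => if emi (g = e) then v else gs g) (@gr K).

Lemma emiT (P : Prop) (T : Type) (a b : T) : P -> (if emi P then a else b) = a.
Proof. by case: (emi P). Qed.
Lemma emiF (P : Prop) (T : Type) (a b : T) : ~ P -> (if emi P then a else b) = b.
Proof. by case: (emi P). Qed.

Section Step.
Variables (K : graph) (u v : gV K) (f e last : gE K).
Hypotheses (vu : v <> u) (fs : gs f = v) (fr : gr f = u)
  (fin : forall g, gr g = u -> g = f) (es : gs e = u) (ls : gs last = u)
  (el : e <> last) (hfin : fin_pred (fun g => gs g = u)).

Definition p2 (g : gE K) : 'I_2 := if emi (g = e) then ord0 else ord_max.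
Definition inVO (z : (gV K + 'I_2)%type) : bool :=
  match z with inl x => x != u | inr _ => true end.
Definition inEO (t : (gE K * option 'I_2)%type) : Prop :=
  match t with (g, None) => gr g <> u | (g, Some _) => gr g = u end.
Definition srcO (t : (gE K * option 'I_2)%type) : (gV K + 'I_2)%type :=
  if gs t.1 == u then inr (p2 t.1) else inl (gs t.1).
Definition rngO (t : (gE K * option 'I_2)%type) : (gV K + 'I_2)%type :=
  match t.2 with None => inl (gr t.1) | Some b => inr b end.
Definition v0O : {x | inVO x} := exist _ (inr ord0) isT.
Definition X := @realize _ inVO _ inEO srcO rngO v0O.

Lemma srcO_in t : inVO (srcO t).
Proof. by rewrite /srcO; case: eqP => //= /eqP. Qed.
Lemma rngO_in t : inEO t -> inVO (rngO t).
Proof. by case: t => g [b|] //= h; apply/eqP. Qed.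

Lemma her : gr e <> u.
Proof. by move=> h; apply: vu; rewrite -fs -(fin h). Qed.

Lemma moveO_X : moveO K X.
Proof.
exists u, 2, p2; split.
- by move=> h; apply: (h e).
- case=> [[|[|m]] hb] //.
  + exists e; split => //; apply: val_inj; rewrite /p2; by case: emi.
  + exists last; split => //; apply: val_inj; rewrite /p2; case: emi => //= h; by case: el.
- move=> a b ha; exfalso; apply: ha; apply: fin_pred_sub hfin; by move=> g [].
- apply: (iso_desc_ext (realize_desc v0O _ _)).
  + by move=> t _; apply: srcO_in.
  + by move=> t; apply: rngO_in.
  + by case=> [x|b] //=; split => /eqP.
  + by [].
  + by [].
  + by [].
Qed.

Definition xV (z : (gV K + 'I_2)%type) : gV X := insubd v0O z.
Lemma xV_val z : inVO z -> val (xV z) = z.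
Proof. by move=> h; rewrite /xV insubdK. Qed.
Lemma gsX (t : gE X) : val (gs t) = srcO (proj1_sig t).
Proof. by rewrite /= insubdK //; apply: srcO_in. Qed.
Lemma grX (t : gE X) : val (gr t) = rngO (proj1_sig t).
Proof. by rewrite /= insubdK //; apply: rngO_in; apply: proj2_sig. Qed.

Lemma gs_eqX (t : gE X) y : srcO (proj1_sig t) = val y -> gs t = y.
Proof. by move=> h; apply: val_inj; rewrite gsX. Qed.

Definition ue : gV X := xV (inr ord0).
Definition eF (b : 'I_2) : gE X := exist inEO (f, Some b) fr.
Definition eX : gE X := exist inEO (e, None) her.

Definition beX (g : gE K) : gE X :=
  match emi (g = e) with
  | left _ => eF ord0
  | right _ => match emi (g = f) with
               | left _ => eF ord_max
               | right hnf => exist inEO (g, None) (fun h => hnf (fin h))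
               end
  end.
Definition bvX (x : gV K) : gV X := if x == u then xV (inr ord_max) else xV (inl x).

Lemma bvX_val x : val (bvX x) = if x == u then inr ord_max else inl x.
Proof. by rewrite /bvX; case: eqP => h; rewrite xV_val //=; apply/eqP. Qed.

Lemma beX_val g : proj1_sig (beX g) =
  if emi (g = e) then (f, Some ord0) else if emi (g = f) then (f, Some ord_max) else (g, None).
Proof. by rewrite /beX; case: emi => //= _; case: emi. Qed.

Lemma ef : e <> f.
Proof. by move=> h; apply: vu; rewrite -fs -h. Qed.

Lemma moveR_X : moveR X (redirect e v).
Proof.
have ueval : val ue = inr ord0 by rewrite /ue xV_val.
have hvv : val (xV (inl v)) = inl v by rewrite xV_val //=; apply/eqP.
have uniq_out : forall t : gE X, gs t = ue -> t = eX.
  case=> [[g o] h] /(f_equal val); rewrite gsX ueval /= /srcO /=.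
  case: eqP => //= hg [] hp; have ge : g = e.
    by move: hp; rewrite /p2; case: emi.
  subst g; apply: sigP_eq => /=; case: o h => // b h; by case: her.
exists ue, (xV (inl v)), eX; split; [split|].
- split; first by exists eX; apply: val_inj; rewrite gsX ueval /= /srcO /= es eqxx /p2; case: emi.
  by exists (eX :: nil) => t /uniq_out ->; left.
- by apply: val_inj; rewrite gsX ueval /= /srcO /= es eqxx /p2; case: emi.
- exact: uniq_out.
- by move/(f_equal val); rewrite grX ueval.
- case=> [[g [b|]] h] /(f_equal val); rewrite grX ueval //= => _.
  have gf : g = f by apply: fin.
  by subst g; rewrite /xV /srcO /= fs; case: eqP.
- exists bvX, beX; split; [split|split; [split|split]].
  + move=> x y /(f_equal val); rewrite !bvX_val.
    by case: eqP => [->|hx]; case: eqP => [->|hy] // [].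
  + by move=> x /(f_equal val); rewrite bvX_val ueval; case: eqP.
  + move=> y hy; case hv: (val y) (valP y) => [x|b] hin.
    * exists x; apply: val_inj; rewrite bvX_val hv; move: hin; rewrite /= => /negPf -> //.
    * exists u; apply: val_inj; rewrite bvX_val hv eqxx; congr inr.
      move: hy hv; case: b {hin} => [[|[|m]] hb] // hy hv; last by apply: val_inj.
      by case: hy; apply: val_inj; rewrite hv ueval; congr inr; apply: val_inj.
  + move=> g g' /(f_equal (fun t => proj1_sig t)); rewrite !beX_val.
    case: (emi (g = e)) => [ge|gne]; case: (emi (g' = e)) => [ge'|gne'];
    try case: (emi (g = f)) => [gf|gnf]; try case: (emi (g' = f)) => [gf'|gnf']; move=> /= H;
    try congruence; by case: H => /eqP.
  + move=> g /(f_equal val); rewrite gsX ueval beX_val /srcO.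
    case: emi => [_|hne] /=; first by rewrite fs; case: eqP.
    case: emi => [_|hnf] /=; first by rewrite fs; case: eqP.
    case: eqP => // _ [] hp; apply: hne; move: hp; rewrite /p2; by case: emi.
  + case=> [[g o] h] hne.
    case: o h hne => [b|] h hne.
    * have gf : g = f by apply: fin.
      subst g; move: b h hne => [[|[|m]] hb] // h hne.
      - exists e; apply: sigP_eq; rewrite beX_val /=; destruct (emi (e = e)) => //; congr (_, Some _); exact: val_inj.
      - exists f; apply: sigP_eq; rewrite beX_val /=; destruct (emi (f = e)) as [fe|fne]; first by case: ef.
        destruct (emi (f = f)) => //; congr (_, Some _); exact: val_inj.
    * exists g; apply: sigP_eq; rewrite beX_val /=.
      case: emi => [ge|gne]; first by subst g; case: hne; apply: val_inj; rewrite gsX ueval /= /srcO /= es eqxx /p2; case: emi.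
      destruct (emi (g = f)) as [gf|gnf] => //; exfalso; apply h; by rewrite gf fr.
  + move=> g; apply: val_inj; rewrite bvX_val (fun_if val) gsX hvv -val_eqE grX ueval beX_val /=.
    case: (classic (g = e)) => [ge|gne].
      by rewrite !(emiT _ _ ge) /=; case: eqP.
    rewrite !(emiF _ _ gne).
    case: (classic (g = f)) => [gf|gnf].
      by rewrite !(emiT _ _ gf) /= /srcO /= gf fs (negPf (introN eqP vu)).
    rewrite !(emiF _ _ gnf) /= /srcO /= /p2 (emiF _ _ gne).
    done.
  + move=> g; apply: val_inj; rewrite bvX_val (fun_if val) grX -val_eqE grX ueval beX_val /=.
    case: (classic (g = e)) => [ge|gne].
      by rewrite !(emiT _ _ ge) /= ge (negPf (introN eqP her)).
    rewrite !(emiF _ _ gne).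
    case: (classic (g = f)) => [gf|gnf].
      by rewrite !(emiT _ _ gf) /= gf fr eqxx.
    by rewrite !(emiF _ _ gnf) /=; case: eqP => // /fin.
Qed.

Lemma step_eq : move_eq K (redirect e v).
Proof.
apply: (rst_trans _ _ _ X); apply: rst_step.
- by right; right; left; apply: moveO_X.
- by right; left; apply: moveR_X.
Qed.
End Step.


Lemma collapse (V : finType) (E : Type) (r : E -> V) (u v : V) (f last : E) (L : list E) :
  forall s : E -> V, v <> u -> s f = v -> r f = u -> (forall g, r g = u -> g = f) ->
  s last = u -> (forall g, s g = u -> g = last \/ In g L) ->
  forall H, iso_desc H (fun x => x <> u) (fun g => g <> last)
     (fun g => if s g == u then v else s g) (fun g => if r g == u then r last else r g) ->
  move_eq (@Graph V E s r) H.
Proof.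
elim: L => [|e L IH] s vu fs fr fin ls cov H hH.
- apply: rst_step; right; left.
  have lu : r last <> u by move=> /fin lf; apply: vu; rewrite -fs -lf.
  exists u, v, last; split; [split|].
  + split; first by exists last.
    by exists (last :: nil) => g /cov [->|[]]; left.
  + exact: ls.
  + by move=> g /cov [->|[]].
  + exact: lu.
  + by move=> g /fin ->.
  + apply: (iso_desc_ext hH) => //.
    * move=> g; split => [hne hs|hs hgl]; [by case: (cov g hs) | by apply: hs; rewrite hgl].
    * move=> g hne /=; have sgu : s g <> u by move=> /cov [|[]].
      rewrite (negPf (introN eqP sgu)); case: eqP => // /fin ->; by rewrite fs.
- case: (classic (s e = u /\ e <> last)) => [[es el]|hn].
  + have hfin : fin_pred (G := @Graph V E s r) (fun g => gs g = u).
      by exists (last :: e :: L) => g /cov [->|hg]; [left|right].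
    have h1 := @step_eq (@Graph V E s r) u v f e last vu fs fr fin es ls el hfin.
    apply: (rst_trans _ _ _ _ _ h1).
    apply: IH => //=.
    * by case: (emi (f = e)).
    * by rewrite emiF //; move=> h; apply: el.
    * move=> g; case: (classic (g = e)) => [ge|gne]; [rewrite emiT // => hvu; by case: vu | rewrite emiF // => /cov [->|[ge|hg]]; [by left|by case: gne|by right]].
    * apply: (iso_desc_ext hH) => // g _; case: (classic (g = e)) => [ge|gne]; [rewrite emiT // ge | by rewrite emiF].
      by rewrite es eqxx; case: eqP.
  + apply: IH => // g /[dup] hs /cov [->|[ge|hg]]; [by left| |by right].
    subst g; left; case: (classic (e = last)) => // hne; by case: hn.
Qed.


Lemma xlt0 a : a <> xfin 0 -> xlt 0 a.
Proof. by case: a => //= [[|m]]. Qed.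

Lemma inP' (T : eqType) (x : T) (s : seq T) : x \in s -> In x s.
Proof. elim: s => //= y s IH; rewrite inE => /orP [/eqP ->|/IH]; [left|right] => //. Qed.

Section Main.
Variables (n : nat) (A : 'M[xnat]_n) (i j : 'I_n).
Hypotheses (hdiag : forall k, A k k <> xfin 0) (hij : i != j) (hAij : A i j <> xfin 0)
  (hfinj : forall l, A j l <> xinf).

Definition G0 := GA A.
Definition A' := row_add_move A i j.

Definition f0 : gE G0 := exist (fun t : 'I_n * 'I_n * nat => xlt t.2 (A t.1.1 t.1.2)) (i, j, 0) (xlt0 hAij).
Definition gjj : gE G0 := exist (fun t : 'I_n * 'I_n * nat => xlt t.2 (A t.1.1 t.1.2)) (j, j, 0) (xlt0 (@hdiag j)).

Definition mkG0 (t : 'I_n * 'I_n * nat) : gE G0 :=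
  match emi (xlt t.2 (A t.1.1 t.1.2)) with
  | left h => exist (fun t : 'I_n * 'I_n * nat => xlt t.2 (A t.1.1 t.1.2)) t h
  | right _ => f0 end.
Lemma mkG0_val t : xlt t.2 (A t.1.1 t.1.2) -> proj1_sig (mkG0 t) = t.
Proof. by rewrite /mkG0; case: emi. Qed.

Lemma gs_mkG0 t : xlt t.2 (A t.1.1 t.1.2) -> gs (mkG0 t) = t.1.1.
Proof. by move=> h; rewrite /= mkG0_val. Qed.

Definition aj (y : 'I_n) : nat := match A j y with xfin m => m | xinf => 0 end.
Lemma ajE y : A j y = xfin (aj y).
Proof. by rewrite /aj; move: (@hfinj y); case: (A j y). Qed.
Definition dd (y : 'I_n) : nat := aj y - (y == j).

Lemma ajj_pos : 0 < aj j.
Proof. move: (@hdiag j); rewrite ajE; case: (aj j) => //. Qed.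

Lemma A'E x y : A' x y =
  if x == i then (if y == j then xpred (xadd (A i y) (A j y)) else xadd (A i y) (A j y))
  else A x y.
Proof. by rewrite /A' /row_add_move mxE. Qed.

Lemma A'_other x y : x != i -> A' x y = A x y.
Proof. by move=> h; rewrite A'E (negPf h). Qed.

Lemma A'_i y K : xlt K (A' i y) <-> (K < dd y \/ (dd y <= K /\ xlt (K - dd y) (A i y))).
Proof.
rewrite A'E eqxx ajE /dd.
have hj := ajj_pos.
case: eqP => [hy|hy] /=; [subst y|]; case: (A i _) => [a|] /=; rewrite -?subn1; split; try lia;
  by move=> _; case: (ltnP K (aj _ - _)) => h; [left|right].
Qed.

Lemma ij : i <> j.
Proof. by move/eqP; rewrite (negPf hij). Qed.

Definition p1 (g : gE G0) : 'I_2 := if emi (g = f0) then ord0 else ord_max.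
Definition inVI (z : ('I_n + 'I_2)%type) : bool := match z with inl x => x != j | inr _ => true end.
Definition inEI (t : (gE G0 * option 'I_2)%type) : Prop :=
  match t with (g, None) => gs g <> j | (g, Some _) => gs g = j end.
Definition srcI (t : (gE G0 * option 'I_2)%type) : ('I_n + 'I_2)%type :=
  match t.2 with None => inl (gs t.1) | Some b => inr b end.
Definition rngI (t : (gE G0 * option 'I_2)%type) : ('I_n + 'I_2)%type :=
  if gr t.1 == j then inr (p1 t.1) else inl (gr t.1).
Definition v0I : {z | inVI z} := exist _ (inr ord0) isT.
Definition H1 := @realize _ inVI _ inEI srcI rngI v0I.

Lemma srcI_in t : inEI t -> inVI (srcI t).
Proof. by case: t => g [b|] //= h; apply/eqP. Qed.
Lemma rngI_in t : inVI (rngI t).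
Proof. by rewrite /rngI; case: eqP => //= /eqP. Qed.

Lemma fin_out_j : fin_pred (G := G0) (fun g => gs g = j).
Proof.
pose M := \max_(l < n) aj l.
pose l := flatten [seq [seq (j, y, k) | k <- iota 0 M] | y <- enum 'I_n].
have hc : forall g : gE G0, gs g = j -> In (proj1_sig g) l.
  move=> [[[x y] k] h] /= hx; subst x; apply: inP'.
  apply/flatten_mapP; exists y; first by rewrite mem_enum.
  apply/mapP; exists k => //; rewrite mem_iota /= add0n.
  move: h; rewrite ajE /= => h; apply: (leq_trans h); exact: (leq_bigmax_cond (F := aj) y isT).
have [l' hl'] := @list_cover _ _ (fun g : gE G0 => proj1_sig g) l (fun g : gE G0 => gs g = j)
  (fun g g' _ _ => @sigP_eq _ _ g g') hc.
by exists l'.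
Qed.

Lemma f0_gjj : gjj <> f0.
Proof. by move/(f_equal (fun t => proj1_sig t)) => [] /esym; apply: ij. Qed.

Lemma moveI_H1 : moveI G0 H1.
Proof.
exists j, 2, p1; split.
- split; [by exists gjj | exact: fin_out_j].
- by move=> h; apply: (h f0).
- case=> [[|[|m]] hb] //.
  + exists f0; split => //; apply: val_inj; rewrite /p1; by case: emi.
  + exists gjj; split => //; apply: val_inj; rewrite /p1; case: emi => //= h; by case: f0_gjj.
- apply: (iso_desc_ext (realize_desc v0I _ _)).
  + by move=> t; apply: srcI_in.
  + by move=> t _; apply: rngI_in.
  + by case=> [x|b] //=; split => /eqP.
  + by [].
  + by [].
  + by [].
Qed.

Definition xV1 (z : ('I_n + 'I_2)%type) : gV H1 := insubd v0I z.
Lemma xV1_val z : inVI z -> val (xV1 z) = z.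
Proof. by move=> h; rewrite /xV1 insubdK. Qed.
Lemma gsH1 (t : gE H1) : val (gs t) = srcI (proj1_sig t).
Proof. by rewrite /= insubdK //; apply: srcI_in; apply: proj2_sig. Qed.
Lemma grH1 (t : gE H1) : val (gr t) = rngI (proj1_sig t).
Proof. by rewrite /= insubdK //; apply: rngI_in. Qed.

Lemma gsH1_eq (t : gE H1) y : srcI (proj1_sig t) = val y -> gs t = y.
Proof. by move=> h; apply: val_inj; rewrite gsH1. Qed.
Lemma grH1_eq (t : gE H1) y : rngI (proj1_sig t) = val y -> gr t = y.
Proof. by move=> h; apply: val_inj; rewrite grH1. Qed.

Definition u1 : gV H1 := xV1 (inr ord0).
Definition v1 : gV H1 := xV1 (inl i).
Definition f1 : gE H1 := exist inEI (f0, None) ij.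
Definition last1 : gE H1 := exist inEI (gjj, Some ord0) (erefl j).

Lemma u1_val : val u1 = inr ord0. Proof. by rewrite xV1_val. Qed.
Lemma v1_val : val v1 = inl i. Proof. by rewrite xV1_val //=. Qed.

Lemma p1_f0 g : p1 g = ord0 -> g = f0.
Proof. by rewrite /p1; case: emi. Qed.
Lemma p1_cases g : p1 g = ord0 \/ p1 g = ord_max.
Proof. by rewrite /p1; case: emi; [left|right]. Qed.

Lemma out_u1 (g : gE H1) : gs g = u1 -> (proj1_sig g).2 = Some ord0 /\ gs (proj1_sig g).1 = j.
Proof.
move/(f_equal val); rewrite gsH1 u1_val; case: g => [[e [b|]] h] //= [] ->; by split.
Qed.

Lemma collapse_hyps :
  [/\ v1 <> u1, gs f1 = v1, gr f1 = u1, (forall g, gr g = u1 -> g = f1) & gs last1 = u1].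
Proof.
split.
- by move/(f_equal val); rewrite u1_val v1_val.
- by apply: gsH1_eq; rewrite v1_val.
- by apply: grH1_eq; rewrite u1_val /= /rngI /= eqxx /p1; case: emi.
- move=> [[e [b|]] h] /(f_equal val); rewrite grH1 u1_val /= /rngI;
  case: eqP => // hej [] /p1_f0 ef0; subst e.
  + by case: ij.
  + by apply: sigP_eq.
- by apply: gsH1_eq; rewrite u1_val.
Qed.

Lemma cover_u1 : exists L, forall g : gE H1, gs g = u1 -> In g L.
Proof.
have [lj hlj] := fin_out_j.
have hinj : forall g g' : gE H1, gs g = u1 -> gs g' = u1 ->
    (proj1_sig g).1 = (proj1_sig g').1 -> g = g'.
  move=> g g' /out_u1 [h1 _] /out_u1 [h2 _] e; apply: sigP_eq.
  by move: h1 h2 e; case: (proj1_sig g) => a b; case: (proj1_sig g') => a' b' /= -> -> ->.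
have hc : forall g : gE H1, gs g = u1 -> In (proj1_sig g).1 lj.
  by move=> g /out_u1 [_ h]; apply: hlj.
have [L hL] := @list_cover _ _ (fun g : gE H1 => (proj1_sig g).1) lj (fun g => gs g = u1) hinj hc.
by exists L.
Qed.

Definition rawT (t : 'I_n * 'I_n * nat) : ('I_n * 'I_n * nat * option 'I_2)%type :=
  if t.1.1 == i then
    (if t.2 < dd t.1.2 then ((j, t.1.2, t.2 + (t.1.2 == j)), Some ord0)
     else ((i, t.1.2, t.2 - dd t.1.2), None))
  else (t, if t.1.1 == j then Some ord_max else None).

Lemma rawT_valid (t : gE (GA A')) :
  xlt (rawT (proj1_sig t)).1.2 (A (rawT (proj1_sig t)).1.1.1 (rawT (proj1_sig t)).1.1.2).
Proof.
case: t => [[[x y] k] h] /=; rewrite /rawT /=.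
case: eqP => [ex|nx].
- subst x; move: h => /A'_i h; case: ifP => hk /=.
  + by rewrite ajE /=; move: hk; rewrite /dd; case: (y == j) => /=; lia.
  + by case: h => [h|[_ h]] //; rewrite h in hk.
- by rewrite -A'_other //; apply/eqP.
Qed.

Lemma rawT_inj (t1 t2 : 'I_n * 'I_n * nat) : rawT t1 = rawT t2 -> t1 = t2.
Proof.
case: t1 t2 => [[x1 y1] k1] [[x2 y2] k2]; rewrite /rawT /=.
case: (x1 =P i) => [->|n1]; case: (x2 =P i) => [->|n2];
  do ?[case: ifP => ?]; move=> //= H; try case: H => *; subst; try congruence.
all: suff -> : k1 = k2 by []; lia.
Qed.

Definition rawE (t : gE (GA A')) : (gE G0 * option 'I_2)%type :=
  (mkG0 (rawT (proj1_sig t)).1, (rawT (proj1_sig t)).2).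
Lemma rawE1 t : proj1_sig (rawE t).1 = (rawT (proj1_sig t)).1.
Proof. exact: (mkG0_val (rawT_valid t)). Qed.

Lemma rawT_y tr : (rawT tr).1.1.2 = tr.1.2.
Proof. by rewrite /rawT; case: ifP => //; case: ifP. Qed.

Lemma rawT_not_last tr : rawT tr <> ((j, j, 0), Some ord0).
Proof.
case: tr => [[x y] k]; rewrite /rawT /=; case: ifP => hx; first case: ifP => hk.
- by move=> [] hy; subst y; rewrite eqxx addn1.
- by case.
- by case: ifP => // _ [] _ _ _ /(f_equal (@nat_of_ord 2)).
Qed.

Lemma rawE_ok t : inEI (rawE t).
Proof.
case: t => [[[x y] k] h] /=; move: (rawT_valid (exist _ (x, y, k) h)); rewrite /rawE /rawT /=.
case: (x =P i) => [ex|nx].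
- subst x; case: ifP => hk hv /=; rewrite /= mkG0_val //=; exact: ij.
- case: (x =P j) => [ex|nxj] hv /=; by rewrite /= mkG0_val.
Qed.

Definition beM (t : gE (GA A')) : gE H1 := exist inEI (rawE t) (rawE_ok t).
Definition bvM (x : 'I_n) : gV H1 := if x == j then xV1 (inr ord_max) else xV1 (inl x).
Lemma bvM_val x : val (bvM x) = if x == j then inr ord_max else inl x.
Proof. by rewrite /bvM; case: eqP => h; rewrite xV1_val //=; apply/eqP. Qed.

Lemma last1_gr : val (gr last1) = inr ord_max.
Proof.
rewrite grH1 /= /rngI /= eqxx /p1; case: emi => // h; by case: f0_gjj.
Qed.

Lemma iso_final : iso_desc (GA A') (fun x : gV H1 => x <> u1) (fun g : gE H1 => g <> last1)
  (fun g => if gs g == u1 then v1 else gs g) (fun g => if gr g == u1 then gr last1 else gr g).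
Proof.
exists bvM, beM; split; [split|split; [split|split]].
- move=> x y /(f_equal val); rewrite !bvM_val.
  by case: eqP => [->|hx]; case: eqP => [->|hy] // [].
- by move=> x /(f_equal val); rewrite bvM_val u1_val; case: eqP.
- move=> y hy; case hv: (val y) (valP y) => [x|b] hin.
  + exists x; apply: val_inj; rewrite bvM_val hv; move: hin; rewrite /= => /negPf -> //.
  + exists j; apply: val_inj; rewrite bvM_val hv eqxx; congr inr.
    move: hy hv; case: b {hin} => [[|[|m]] hb] // hy hv; last by apply: val_inj.
    by case: hy; apply: val_inj; rewrite hv u1_val; congr inr; apply: val_inj.
- move=> t1 t2 /(f_equal (fun t => proj1_sig t)) /= e.
  apply: sigP_eq; apply: rawT_inj.
  rewrite (surjective_pairing (rawT (proj1_sig t1))) (surjective_pairing (rawT (proj1_sig t2))).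
  rewrite -!rawE1 e; congr (_, _); exact: (f_equal snd e).
- move=> t /(f_equal (fun t => proj1_sig t)) /= e; apply: (@rawT_not_last (proj1_sig t)).
  move: (f_equal snd e) => /= e2; rewrite (surjective_pairing (rawT (proj1_sig t))) -rawE1 e e2 /=; done.
- move=> [[e o] h] hne; case: e h hne => [[[x y] k] he] h hne.
  case: o h hne => [b|] h hne.
  + have hx : x = j := h; move: he h hne; rewrite hx => he h hne.
    case: b h hne => [[|[|m]] hb] // h hne.
    * have hk1 : (y == j) <= k.
        case: eqP => //= hy; subst y; case: k he h hne => // he h hne; case: hne; apply: sigP_eq => /=.
        by congr (_, Some _); [apply: sigP_eq | apply: val_inj].
      have hv : xlt (k - (y == j)) (A' i y).
        apply/A'_i; left; move: (he); rewrite ajE /dd /=; lia.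
      exists (exist (fun t : 'I_n * 'I_n * nat => xlt t.2 (A' t.1.1 t.1.2)) (i, y, k - (y == j)) hv).
      apply: sigP_eq; rewrite /= /rawE /rawT /= eqxx.
      have -> : k - (y == j) < dd y by move: (he); rewrite ajE /dd /=; lia.
      rewrite /= subnK //; congr (_, Some _); last by apply: val_inj.
      by apply: sigP_eq; rewrite mkG0_val.
    * have hv : xlt k (A' j y) by rewrite A'_other // eq_sym.
      exists (exist (fun t : 'I_n * 'I_n * nat => xlt t.2 (A' t.1.1 t.1.2)) (j, y, k) hv).
      apply: sigP_eq; rewrite /= /rawE /rawT /= eq_sym (negPf hij) eqxx.
      congr (_, Some _); last by apply: val_inj.
      by apply: sigP_eq; rewrite mkG0_val.
  + have hx : x <> j := h; case: (x =P i) => [ex|nx].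
    * subst x.
      have hv : xlt (k + dd y) (A' i y).
        by apply/A'_i; right; rewrite addnK leq_addl.
      exists (exist (fun t : 'I_n * 'I_n * nat => xlt t.2 (A' t.1.1 t.1.2)) (i, y, k + dd y) hv).
      apply: sigP_eq; rewrite /= /rawE /rawT /= eqxx ltnNge leq_addl /= addnK.
      by congr (_, _); apply: sigP_eq; rewrite mkG0_val.
    * have hv : xlt k (A' x y) by rewrite A'_other //; apply/eqP.
      exists (exist (fun t : 'I_n * 'I_n * nat => xlt t.2 (A' t.1.1 t.1.2)) (x, y, k) hv).
      apply: sigP_eq; rewrite /= /rawE /rawT /=.
      case: (x =P i) => // _; case: (x =P j) => // _.
      by congr (_, _); apply: sigP_eq; rewrite mkG0_val.
- move=> t; apply: val_inj; rewrite bvM_val (fun_if val) -(val_eqE (gs (beM t)) u1) gsH1 u1_val v1_val /=.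
  case: t => [[[x y] k] h] /=; move: (rawT_valid (exist _ (x, y, k) h)); rewrite /rawE /rawT /=.
  case: (x =P i) => [ex|nx].
  + subst x; rewrite (negPf hij); case: ifP => hk hv /=; rewrite /srcI /= ?mkG0_val ?gs_mkG0 //=.
  + case: (x =P j) => [ex|nxj] hv; rewrite /srcI /= ?mkG0_val //=.
- move=> t; apply: val_inj; rewrite bvM_val (fun_if val) -(val_eqE (gr (beM t)) u1) last1_gr !grH1 u1_val /=.
  have hy : gr (rawE t).1 = (proj1_sig t).1.2.
    by rewrite /= rawE1 rawT_y.
  rewrite /rngI hy /=.
  case: (_ == j) => //; by case: (p1_cases (rawE t).1) => ->.
Qed.

Lemma main_move : mx_move_eq A A'.
Proof.
apply: (rst_trans _ _ _ H1).
  by apply: rst_step; right; right; right; exact: moveI_H1.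
have [L hL] := cover_u1.
case: collapse_hyps => h1 h2 h3 h4 h5.
exact: (@collapse (gV H1) (gE H1) (@gr H1) u1 v1 f1 last1 L (@gs H1) h1 h2 h3 h4 h5
  (fun g hg => or_intror (hL g hg)) (GA A') iso_final).
Qed.

Lemma pos_mono x y : xlt 0 (A x y) -> xlt 0 (A' x y).
Proof.
rewrite A'E; case: eqP => [ex|nx] //; subst x.
move: (ajE y) (ajj_pos); case: eqP => [ey|ny]; [subst y|] => -> hp /=;
  case: (A i _) => //= a; rewrite -?subn1; lia.
Qed.

Lemma diag' k : A' k k <> xfin 0.
Proof.
rewrite A'E; case: eqP => [ek|nk]; last exact: hdiag.
subst k; rewrite (negPf hij) ajE; move: (@hdiag i); case: (A i i) => //= a ha.
by case=> h; apply: ha; congr xfin; lia.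
Qed.
End Main.

Lemma xlt_0 k a : xlt k a -> xlt 0 a.
Proof. by case: a => //= m; lia. Qed.

Lemma sc_mono n (B C : 'M[xnat]_n) : (forall x y, xlt 0 (B x y) -> xlt 0 (C x y)) ->
  strongly_connected (GA B) -> strongly_connected (GA C).
Proof.
move=> hm hB x y; elim: (hB x y) => {x y} [x y [[[[a b] k] hk] [/= ea eb]]|x|x y z _ h1 _ h2].
- subst a b; apply: rt_step.
  exists (exist (fun t : 'I_n * 'I_n * nat => xlt t.2 (C t.1.1 t.1.2)) (x, y, 0) (hm _ _ (xlt_0 hk))).
  by split.
- exact: rt_refl.
- exact: rt_trans h1 h2.
Qed.



Theorem lemma7p1 (n : nat) (A : 'M[xnat]_n) (i j : 'I_n) :
  (forall k, A k k <> xfin 0) ->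
  i != j ->
  A i j <> xfin 0 ->
  (forall l, A j l <> xinf) ->
  [/\ mx_move_eq A (row_add_move A i j),
      (forall k, row_add_move A i j k k <> xfin 0),
      (irreducible A -> irreducible (row_add_move A i j)) &
      (forall (m : nat) (h : m <= n),
         irreducible (corner h A) -> irreducible (corner h (row_add_move A i j)))].
Proof.
move=> hdiag hij hAij hfinj; split.
- exact: (main_move hdiag hij hAij hfinj).
- by move=> k; apply: (diag' hdiag hij hfinj).
- apply: sc_mono => x y hxy; exact: (pos_mono hdiag hij hfinj hxy).
- move=> m h; apply: sc_mono => x y.
  have hp := pos_mono hdiag hij hfinj (x := widen_ord h x) (y := widen_ord h y).
  rewrite /corner.
  by rewrite 2!mxE.
Qed.
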